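(* Let $G=(\mathcal{V},\mathcal{E})$ be a hypergraph, $P$ a pmf on $\mathcal{V}$, $L\ge1$, and suppose $G_P$ is complete multipartite with partition $\{\mathcal{I}_j\}_{j=1}^k$ of $\mathrm{supp}(P)$ into independent sets. Define the pmf $P^*$ on $[k]$ by $P^*(j)=\sum_{v\in\mathcal{I}_j}P(v)$. Then $I_{L+1}(G,P)=H_{L+1}(P^* )$ and for every $\ell\in[L+1]$, $$\theta^{(\ell)}_{L+1}(G,P)=2H_{L+1}(P^* )-\frac{2L+1-\ell}{L}H_{2L+2-\ell}(P^* ).$$
   Context: Notation: $[j]=\{1,\dots,j\}$, $[i:j]=\{i,\dots,j\}$; $\log$ base 2. A hypergraph $G=(\mathcal{V},\mathcal{E})$ has finite $\mathcal{V}$ and $\mathcal{E}\subseteq2^{\mathcal{V}}$ with edges of cardinality $\ge2$. An independent set is a vertex subset none of whose subsets is an edge; a hypergraph is complete multipartite with partition $\{\mathcal{I}_j\}$ of its vertex set into independent sets if every vertex subset is either an edge or contained in some $\mathcal{I}_j$. $G_P=(\mathcal{V}_P,\mathcal{E}_P)$ with $\mathcal{V}_P=\mathrm{supp}(P)$ and $\mathcal{E}_P$ the edges of $G$ contained in $\mathcal{V}_P$. For $v_{[k]}\in\mathcal{V}^k$, $\sigma(v_{[k]})=\{v_1,\dots,v_k\}$, $P(v_S)=\prod_{j\in S}P(v_j)$. $I_{L+1}(G,P):=-\frac1L\log\sum_{v_{[L+1]}:\sigma(v_{[L+1]})\notin\mathcal{E}}P(v_{[L+1]})$, $\theta^{(L+1)}_{L+1}(G,P):=I_{L+1}(G,P)$,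 and for $\ell\in[L]$, $\theta^{(\ell)}_{L+1}(G,P):=2I_{L+1}(G,P)+\frac1L\log\sum_{v_{[\ell]}}P(v_{[\ell]})\Big[\sum_{v_{[\ell+1:L+1]}:\sigma(v_{[L+1]})\notin\mathcal{E}}P(v_{[\ell+1:L+1]})\Big]^2$. The Rényi entropy of order $\alpha\ge2$ is $H_\alpha(Q)=-\frac{1}{\alpha-1}\log\sum_uQ(u)^\alpha$. *)

(* Defs.v *)
From Stdlib Require Import Reals.
From mathcomp Require Import all_boot.

Set Implicit Arguments.
Unset Strict Implicit.
Unset Printing Implicit Defensive.

Local Open Scope R_scope.

Definition log2 (x : R) : R := ln x / ln 2.

Definition R_zero : R := 0.
Definition R_one : R := 1.
Notation "\rsum_ ( i : T | C ) F" := (\big[Rplus/R_zero]_(i : T | C) F)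
  (at level 41, F at level 41, i, T at level 50).
Notation "\rsum_ ( i : T ) F" := (\big[Rplus/R_zero]_(i : T) F)
  (at level 41, F at level 41, i, T at level 50).

Section Defs.
Variable V : finType.

Definition is_hypergraph (E : {set {set V}}) : Prop :=
  forall e, e \in E -> (2 <= #|e|)%N.

Definition is_pmf (P : V -> R) : Prop :=
  (forall v, 0 <= P v) /\ \rsum_(v : V) P v = 1.

Definition supp (P : V -> R) : {set V} :=
  [set v | if Rlt_dec 0 (P v) then true else false].

Definition independent (E : {set {set V}}) (A : {set V}) : Prop :=
  forall S : {set V}, S \subset A -> S \notin E.

Definition edges_P (E : {set {set V}}) (P : V -> R) : {set {set V}} :=
  [set e in E | e \subset supp P].

Definition complete_multipartite_P (E : {set {set V}}) (P : V -> R)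
    (k : nat) (I : 'I_k -> {set V}) : Prop :=
  [/\ (forall j, I j != set0),
      (forall i j, i != j -> [disjoint I i & I j]),
      \bigcup_(j < k) I j = supp P,
      (forall j, independent (edges_P E P) (I j)) &
      (forall S : {set V}, S \subset supp P ->
          S \in edges_P E P \/ exists j, S \subset I j)].

Definition sigma n (v : {ffun 'I_n -> V}) : {set V} := [set v i | i : 'I_n].

Definition Pprod (P : V -> R) n (v : {ffun 'I_n -> V}) : R :=
  \big[Rmult/R_one]_(i < n) P (v i).

Definition I_Lp1 (E : {set {set V}}) (P : V -> R) (L : nat) : R :=
  - / INR L * log2 (\rsum_(v : {ffun 'I_L.+1 -> V} | sigma v \notin E) Pprod P v).

(* theta^{(l)}_{L+1}(G,P), for l in [L+1]; the tuple v_[L+1] is split as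
   the prefix v_[l] (a) and the suffix v_[l+1:L+1] (b), so that
   sigma(v_[L+1]) = sigma(a) :|: sigma(b). *)
Definition theta (E : {set {set V}}) (P : V -> R) (L l : nat) : R :=
  if (l == L.+1)%N then I_Lp1 E P L
  else 2 * I_Lp1 E P L + / INR L * log2
    (\rsum_(a : {ffun 'I_l -> V})
       Pprod P a *
       (\rsum_(b : {ffun 'I_(L.+1 - l) -> V} | (sigma a :|: sigma b) \notin E)
          Pprod P b) ^ 2).

End Defs.

Definition renyi (k alpha : nat) (Q : 'I_k -> R) : R :=
  - / INR (alpha - 1) * log2 (\rsum_(u : 'I_k) Q u ^ alpha).

(* Main.v *)
From HB Require Import structures.
Require Import Defs.
From Stdlib Require Import Reals Lra.
From mathcomp Require Import all_boot zify.
Set Implicit Arguments.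
Unset Strict Implicit.
Local Open Scope R_scope.

Lemma RpA : associative Rplus. Proof. move=> x y z; lra. Qed.
Lemma RmA : associative Rmult. Proof. move=> x y z; lra. Qed.
Lemma Rplus0l : left_id R_zero Rplus. Proof. move=> x; rewrite /R_zero; lra. Qed.
Lemma Rmult1l : left_id R_one Rmult. Proof. move=> x; rewrite /R_one; lra. Qed.
HB.instance Definition _ := Monoid.isComLaw.Build R R_zero Rplus RpA Rplus_comm Rplus0l.
HB.instance Definition _ := Monoid.isComLaw.Build R R_one Rmult RmA Rmult_comm Rmult1l.
Lemma Rm0l : left_zero R_zero Rmult. Proof. move=> x; rewrite /R_zero; lra. Qed.
Lemma Rm0r : right_zero R_zero Rmult. Proof. move=> x; rewrite /R_zero; lra. Qed.
HB.instance Definition _ := Monoid.isMulLaw.Build R R_zero Rmult Rm0l Rm0r.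
Lemma RDl : left_distributive Rmult Rplus. Proof. move=> x y z; lra. Qed.
Lemma RDr : right_distributive Rmult Rplus. Proof. move=> x y z; lra. Qed.
HB.instance Definition _ := Monoid.isAddLaw.Build R Rmult Rplus RDl RDr.


Lemma prod_const n c : \big[Rmult/R_one]_(i < n) c = c ^ n.
Proof.
elim: n => [|n IH]; first by rewrite big_ord0.
rewrite big_ord_recr /= IH /=; lra.
Qed.

Section Main.
Variables (V : finType) (E : {set {set V}}) (P : V -> R) (k : nat) (I : 'I_k -> {set V}).
Hypothesis Hpmf : is_pmf P.
Hypothesis HI : complete_multipartite_P E P I.

Lemma Pprod_out n (v : {ffun 'I_n -> V}) : ~~ (Defs.sigma v \subset supp P) -> Pprod P v = 0.
Proof.
case/subsetPn => x /imsetP [i _ ->]; rewrite inE => Hx.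
have H0 : P (v i) = 0.
  case: Hpmf => Hnn _; move: Hx; case: Rlt_dec => // Hn _.
  have := Hnn (v i); lra.
rewrite /Pprod (bigD1 i) //= H0 /R_zero; lra.
Qed.

Lemma notE_iff (A : {set V}) : A \subset supp P ->
  (A \notin E) = [exists j, A \subset I j].
Proof.
case: HI => _ _ _ Hind Hcm HA.
apply/idP/idP.
- move=> HnE; case: (Hcm A HA) => [|[j Hj]].
  + by rewrite inE (negbTE HnE).
  + by apply/existsP; exists j.
- case/existsP => j Hj; apply/negP => HE.
  have := Hind j A Hj; by rewrite inE HE HA.
Qed.

Lemma blk_uniq (A : {set V}) i j : A != set0 -> A \subset I i -> A \subset I j -> i = j.
Proof.
case/set0Pn => x Hx /subsetP Hi /subsetP Hj.
case: (eqVneq i j) => // Hne; exfalso.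
case: HI => _ Hd _ _ _.
have := disjointFr (Hd i j Hne) (Hi x Hx); by rewrite (Hj x Hx).
Qed.

Lemma sum_blk1 (A : {set V}) j0 (x : 'I_k -> R) : A != set0 -> A \subset I j0 ->
  \rsum_(j : 'I_k | A \subset I j) x j = x j0.
Proof.
move=> Hn Hj0; rewrite (bigD1 j0) //= big1 /R_zero; first lra.
move=> j /andP [Hj Hne]; exfalso.
by move: Hne; rewrite (blk_uniq Hn Hj Hj0) eqxx.
Qed.

Lemma sum_blk0 (A : {set V}) (x : 'I_k -> R) : ~~ [exists j, A \subset I j] ->
  \rsum_(j : 'I_k | A \subset I j) x j = 0.
Proof.
move=> Hn; rewrite big1 // => j Hj; exfalso.
by move/negP: Hn; apply; apply/existsP; exists j.
Qed.

Lemma sigma_n0 n (v : {ffun 'I_n.+1 -> V}) : Defs.sigma v != set0.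
Proof. apply/set0Pn; exists (v ord0); apply/imsetP; by exists ord0. Qed.

Lemma sum_in_block n j :
  \rsum_(v : {ffun 'I_n -> V} | Defs.sigma v \subset I j) Pprod P v
  = (\rsum_(v : V | v \in I j) P v) ^ n.
Proof.
rewrite -prod_const bigA_distr_big; apply: eq_bigl => f.
apply/subsetP/ffun_onP.
- by move=> H x; apply: H; apply/imsetP; exists x.
- by move=> H y /imsetP [x _ ->]; apply: H.
Qed.


Lemma sum_notE n :
  \rsum_(v : {ffun 'I_n.+1 -> V} | Defs.sigma v \notin E) Pprod P v
  = \rsum_(j : 'I_k) (\rsum_(v : V | v \in I j) P v) ^ n.+1.
Proof.
transitivity (\rsum_(v : {ffun 'I_n.+1 -> V})
   \rsum_(j : 'I_k | Defs.sigma v \subset I j) Pprod P v).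
  rewrite big_mkcond; apply: eq_bigr => v _.
  case: (boolP (Defs.sigma v \subset supp P)) => Hs.
  - rewrite notE_iff //; case: (boolP [exists j, Defs.sigma v \subset I j]) => He.
    + by case/existsP: (He) => j0 Hj0; rewrite (sum_blk1 (fun _ => Pprod P v) (sigma_n0 v) Hj0).
    + by rewrite sum_blk0.
  - rewrite Pprod_out // big1 //; by case: ifP.
under eq_bigr do rewrite big_mkcond.
rewrite exchange_big; apply: eq_bigr => j _.
by rewrite -big_mkcond sum_in_block.
Qed.

Lemma T_a l m (a : {ffun 'I_l.+1 -> V}) : Defs.sigma a \subset supp P ->
  \rsum_(b : {ffun 'I_m -> V} | (Defs.sigma a :|: Defs.sigma b) \notin E) Pprod P b
  = \rsum_(j : 'I_k | Defs.sigma a \subset I j) (\rsum_(v : V | v \in I j) P v) ^ m.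
Proof.
move=> Ha.
under [RHS]eq_bigr do rewrite -sum_in_block big_mkcond.
rewrite exchange_big big_mkcond; apply: eq_bigr => b _.
case: (boolP (Defs.sigma b \subset supp P)) => Hs.
- rewrite notE_iff; last by rewrite subUset Ha Hs.
  case: (boolP [exists j, (Defs.sigma a :|: Defs.sigma b) \subset I j]) => He.
  + case/existsP: (He) => j0; rewrite subUset => /andP [H1 H2].
    by rewrite (sum_blk1 (fun j => if Defs.sigma b \subset I j then Pprod P b else R_zero) (sigma_n0 a) H1) /= H2.
  + rewrite big1 // => j Hj; case: ifP => // Hb; exfalso.
    by move/negP: He; apply; apply/existsP; exists j; rewrite subUset Hj Hb.
- rewrite Pprod_out // big1 //; first by case: ifP.
  by move=> j _; case: ifP.
Qed.

Lemma sum_theta l m :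
  \rsum_(a : {ffun 'I_l.+1 -> V})
     Pprod P a *
     (\rsum_(b : {ffun 'I_m -> V} | (Defs.sigma a :|: Defs.sigma b) \notin E)
        Pprod P b) ^ 2
  = \rsum_(j : 'I_k) (\rsum_(v : V | v \in I j) P v) ^ (l.+1 + 2 * m).
Proof.
transitivity (\rsum_(a : {ffun 'I_l.+1 -> V})
   \rsum_(j : 'I_k | Defs.sigma a \subset I j)
      Pprod P a * (\rsum_(v : V | v \in I j) P v) ^ (2 * m)).
  apply: eq_bigr => a _.
  case: (boolP (Defs.sigma a \subset supp P)) => Hs.
  - rewrite T_a //; case: (boolP [exists j, Defs.sigma a \subset I j]) => He.
    + case/existsP: (He) => j0 Hj0.
      rewrite (sum_blk1 (fun j => (\rsum_(v : V | v \in I j) P v) ^ m) (sigma_n0 a) Hj0).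
      rewrite (sum_blk1 (fun j => Pprod P a * (\rsum_(v : V | v \in I j) P v) ^ (2 * m)) (sigma_n0 a) Hj0).
      by rewrite -pow_mult mulnC.
    + by rewrite !sum_blk0 //; ring.
  - rewrite Pprod_out // Rmult_0_l; symmetry; apply: big1 => j _.
    by rewrite Rmult_0_l.
under eq_bigr do rewrite big_mkcond.
rewrite exchange_big; apply: eq_bigr => j _.
rewrite -big_mkcond -big_distrl /= sum_in_block -pow_add; reflexivity.
Qed.

End Main.

Theorem mainTheorem9 (V : finType) (E : {set {set V}}) (P : V -> R) (L : nat)
    (k : nat) (I : 'I_k -> {set V}) :
  is_hypergraph E ->
  is_pmf P ->
  (1 <= L)%N ->
  complete_multipartite_P E P I ->
  let Pstar := fun j : 'I_k => \rsum_(v : V | v \in I j) P v in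
  I_Lp1 E P L = renyi L.+1 Pstar /\
  (forall l : nat, (1 <= l <= L.+1)%N ->
     theta E P L l =
       2 * renyi L.+1 Pstar
       - INR (2 * L + 1 - l) / INR L * renyi (2 * L + 2 - l) Pstar).
Proof.
move=> _ Hpmf HL HI Pstar.
have HL0 : INR L <> 0 by apply: not_0_INR; lia.
have HI1 : I_Lp1 E P L = renyi L.+1 Pstar.
  by rewrite /I_Lp1 /renyi (sum_notE Hpmf HI L) subn1.
split=> // l /andP [Hl1 HlL].
rewrite /theta; case: eqP => [->|Hne].
  rewrite HI1.
  have -> : (2 * L + 1 - L.+1 = L)%N by lia.
  have -> : (2 * L + 2 - L.+1 = L.+1)%N by lia.
  by field.
case: l Hl1 HlL Hne => // l _ HlL Hne.
rewrite (sum_theta Hpmf HI l (L.+1 - l.+1)) HI1.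
have -> : (l.+1 + 2 * (L.+1 - l.+1) = 2 * L + 2 - l.+1)%N by lia.
set r := renyi L.+1 Pstar.
have HM : INR (2 * L + 1 - l.+1) <> 0 by apply: not_0_INR; lia.
rewrite /renyi.
have -> : (2 * L + 2 - l.+1 - 1 = 2 * L + 1 - l.+1)%N by lia.
rewrite /Pstar; field; split => //.
Qed.
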